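(* Let $n\in\mathbb{N}$, $\alpha,\beta>-1$, $\sigma:=\alpha+\beta+1$, and let $c_{ij}\equiv c_{ij}(n,\alpha,\beta)$ ($0\le i,j\le n$) be the B\'ezier coefficients of the dual Bernstein polynomials, i.e. $D^n_i(x;\alpha,\beta)=\sum_{j=0}^n c_{ij}B^n_j(x)$. Put \[ A(h):=(h-n)(h+\beta+1),\qquad B(h):=h(h-n-\alpha-1), \] and adopt the convention $c_{ij}:=0$ whenever $i$ or $j$ lies outside $\{0,\ldots,n\}$. Then for $0\le i\le n-1$ and $0\le j\le n$, \[ c_{i+1,j}=\frac{1}{A(i)}\Big\{(i-j)(2i+2j-2n-\alpha+\beta)\,c_{ij}+B(j)\,c_{i,j-1}+A(j)\,c_{i,j+1}-B(i)\,c_{i-1,j}\Big\}, \] and the first row is given by \[ c_{0j}=\frac{(\sigma+1)_n(\beta+2)_n}{n!\,B(\alpha+1,\beta+1)}\cdot\frac{(-1)^j}{(\alpha+1)_{n-j}(\beta+2)_j}\qquad(0\le j\le n). \]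
   Context: For $\alpha,\beta>-1$ define the inner product $\langle f,g\rangle:=\int_0^1(1-x)^{\alpha}x^{\beta}f(x)g(x)\,dx$. The Bernstein polynomials of degree $n$ are $B^n_i(x)=\binom ni x^i(1-x)^{n-i}$, $0\le i\le n$. The dual Bernstein polynomials $D^n_0(x;\alpha,\beta),\ldots,D^n_n(x;\alpha,\beta)$ are the unique polynomials of degree at most $n$ with $\langle D^n_i,B^n_j\rangle=\delta_{ij}$ for $i,j=0,\ldots,n$. Notation: $(c)_k:=\prod_{j=0}^{k-1}(c+j)$; $B(\lambda,\mu)=\Gamma(\lambda)\Gamma(\mu)/\Gamma(\lambda+\mu)$ (the beta function; not to be confused with the polynomial $B(h)$ defined in the claim). *)

(* Defs.v *)
From Stdlib Require Import Reals Lra ZArith.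
Open Scope R_scope.

Definition improper_int01 (f : R -> R) (l : R) : Prop :=
  forall eps : R, eps > 0 ->
  exists delta : R, delta > 0 /\
  forall a b : R, 0 < a < delta -> 1 - delta < b < 1 ->
    exists pr : Riemann_integrable f a b, Rabs (RiemannInt pr - l) < eps.

Definition jweight (alpha beta x : R) : R := Rpower (1 - x) alpha * Rpower x beta.

Definition bern (n i : nat) (x : R) : R := C n i * x ^ i * (1 - x) ^ (n - i).

Definition bezier (n : nat) (c : nat -> nat -> R) (i : nat) (x : R) : R :=
  sum_f_R0 (fun j => c i j * bern n j x) n.

Definition is_dual_coeffs (n : nat) (alpha beta : R) (c : nat -> nat -> R) : Prop :=
  forall i k : nat, (i <= n)%nat -> (k <= n)%nat ->
    improper_int01 (fun x => jweight alpha beta x * bezier n c i x * bern n k x)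
                   (if Nat.eqb i k then 1 else 0).

Definition cext (n : nat) (c : nat -> nat -> R) (i j : Z) : R :=
  if (Z.leb 0 i && Z.leb i (Z.of_nat n) && Z.leb 0 j && Z.leb j (Z.of_nat n))%bool
  then c (Z.to_nat i) (Z.to_nat j) else 0.

Fixpoint poch (c : R) (k : nat) : R :=
  match k with O => 1 | S k' => poch c k' * (c + INR k') end.

Definition Apol (n : nat) (beta h : R) : R := (h - INR n) * (h + beta + 1).
Definition Bpol (n : nat) (alpha h : R) : R := h * (h - INR n - alpha - 1).

(* Main.v *)
Require Import Defs.
From Stdlib Require Import Reals Lra Lia ZArith.
From Coquelicot Require Import Coquelicot.
Open Scope R_scope.

Definition impR (f : R -> R) (l : R) : Prop :=
  forall eps : R, eps > 0 -> exists delta : R, delta > 0 /\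
  forall a b : R, 0 < a < delta -> 1 - delta < b < 1 ->
    ex_RInt f a b /\ Rabs (RInt f a b - l) < eps.

Lemma imp_impR f l : improper_int01 f l -> impR f l.
Proof.
  intros H eps He. destruct (H eps He) as [d [Hd H']]. exists d; split; auto.
  intros a b Ha Hb. destruct (H' a b Ha Hb) as [pr Hpr]. split.
  - exact (ex_RInt_Reals_1 f a b pr).
  - rewrite (RInt_Reals f a b pr). exact Hpr.
Qed.

Lemma abs_lt_iff x e : Rabs x < e <-> - e < x < e.
Proof. split.
  - intros H. destruct (Rabs_def2 _ _ H). lra.
  - intros [H1 H2]. apply Rabs_def1; lra.
Qed.

Lemma impR_unique f l1 l2 : impR f l1 -> impR f l2 -> l1 = l2.
Proof.
  intros H1 H2. destruct (Rtotal_order l1 l2) as [Hlt|[Heq|Hgt]]; auto; exfalso.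
  - destruct (H1 ((l2-l1)/4)) as [d1 [Hd1 K1]]; [lra|].
    destruct (H2 ((l2-l1)/4)) as [d2 [Hd2 K2]]; [lra|].
    set (d := Rmin (Rmin d1 d2) (1/2)).
    assert (d1 >= Rmin (Rmin d1 d2) (1/2)) by (unfold Rmin; repeat destruct Rle_dec; lra).
    assert (d2 >= Rmin (Rmin d1 d2) (1/2)) by (unfold Rmin; repeat destruct Rle_dec; lra).
    assert (0 < d) by (unfold d, Rmin; repeat destruct Rle_dec; lra).
    destruct (K1 (d/2) (1 - d/2)) as [_ A1]; [unfold d in *; lra| unfold d in *; lra|].
    destruct (K2 (d/2) (1 - d/2)) as [_ A2]; [unfold d in *; lra| unfold d in *; lra|].
    apply abs_lt_iff in A1. apply abs_lt_iff in A2. lra.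
  - destruct (H1 ((l1-l2)/4)) as [d1 [Hd1 K1]]; [lra|].
    destruct (H2 ((l1-l2)/4)) as [d2 [Hd2 K2]]; [lra|].
    set (d := Rmin (Rmin d1 d2) (1/2)).
    assert (d1 >= Rmin (Rmin d1 d2) (1/2)) by (unfold Rmin; repeat destruct Rle_dec; lra).
    assert (d2 >= Rmin (Rmin d1 d2) (1/2)) by (unfold Rmin; repeat destruct Rle_dec; lra).
    assert (0 < d) by (unfold d, Rmin; repeat destruct Rle_dec; lra).
    destruct (K1 (d/2) (1 - d/2)) as [_ A1]; [unfold d in *; lra| unfold d in *; lra|].
    destruct (K2 (d/2) (1 - d/2)) as [_ A2]; [unfold d in *; lra| unfold d in *; lra|].
    apply abs_lt_iff in A1. apply abs_lt_iff in A2. lra.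
Qed.

Lemma impR_ext f g l : (forall x, 0 < x < 1 -> f x = g x) -> impR f l -> impR g l.
Proof.
  intros E H eps He. destruct (H eps He) as [d [Hd K]]. exists (Rmin d (1/2)); split.
  { unfold Rmin; destruct Rle_dec; lra. }
  intros a b Ha Hb.
  assert (d >= Rmin d (1/2) /\ 1/2 >= Rmin d (1/2)) by (unfold Rmin; destruct Rle_dec; lra).
  destruct (K a b) as [K1 K2]; [lra|lra|].
  assert (E' : forall x, Rmin a b < x < Rmax a b -> f x = g x).
  { intros x Hx. apply E. unfold Rmin, Rmax in Hx; destruct Rle_dec; lra. }
  split.
  - exact (ex_RInt_ext f g a b E' K1).
  - rewrite <- (RInt_ext f g a b E'). exact K2.
Qed.

Lemma impR_plus f g l1 l2 : impR f l1 -> impR g l2 -> impR (fun x => f x + g x) (l1 + l2).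
Proof.
  intros H1 H2 eps He.
  destruct (H1 (eps/2)) as [d1 [Hd1 K1]]; [lra|].
  destruct (H2 (eps/2)) as [d2 [Hd2 K2]]; [lra|].
  exists (Rmin d1 d2). split. { unfold Rmin; destruct Rle_dec; lra. }
  intros a b Ha Hb.
  assert (d1 >= Rmin d1 d2) by (unfold Rmin; destruct Rle_dec; lra).
  assert (d2 >= Rmin d1 d2) by (unfold Rmin; destruct Rle_dec; lra).
  destruct (K1 a b) as [E1 A1]; [lra|lra|].
  destruct (K2 a b) as [E2 A2]; [lra|lra|].
  split.
  - exact (ex_RInt_plus f g a b E1 E2).
  - assert (Eq : RInt (fun x => f x + g x) a b = RInt f a b + RInt g a b) by exact (RInt_plus f g a b E1 E2). rewrite Eq.
    apply abs_lt_iff in A1. apply abs_lt_iff in A2. apply abs_lt_iff. lra.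
Qed.

Lemma impR_scal k f l : impR f l -> impR (fun x => k * f x) (k * l).
Proof.
  intros H eps He.
  assert (Hk : 0 <= Rabs k) by apply Rabs_pos.
  destruct (H (eps / (Rabs k + 1))) as [d [Hd K]].
  { apply Rdiv_lt_0_compat; lra. }
  exists d. split; auto. intros a b Ha Hb. destruct (K a b Ha Hb) as [E A].
  split.
  - exact (ex_RInt_scal f a b k E).
  - assert (Eq : RInt (fun x => k * f x) a b = k * RInt f a b) by exact (RInt_scal f a b k E). rewrite Eq.
    replace (k * RInt f a b - k * l) with (k * (RInt f a b - l)) by ring.
    rewrite Rabs_mult.
    apply Rle_lt_trans with (Rabs k * (eps / (Rabs k + 1))).
    + apply Rmult_le_compat_l; lra.
    + apply Rlt_le_trans with ((Rabs k + 1) * (eps / (Rabs k + 1))).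
      * apply Rmult_lt_compat_r; [apply Rdiv_lt_0_compat|]; lra.
      * right. field. lra.
Qed.

Lemma impR_sum (F : nat -> R -> R) (L : nat -> R) N :
  (forall j, (j <= N)%nat -> impR (F j) (L j)) ->
  impR (fun x => sum_f_R0 (fun j => F j x) N) (sum_f_R0 L N).
Proof.
  induction N as [|N IH]; intros H.
  - simpl. apply (impR_ext (F 0%nat)); auto.
  - simpl. apply impR_plus.
    + apply IH. intros j Hj. apply H. lia.
    + apply (impR_ext (F (S N))); auto.
Qed.

Lemma rpow_le1 z p : 0 < z < 1 -> p > 0 -> 0 < Rpower z p <= 1.
Proof.
  intros Hz Hp. unfold Rpower. split. apply exp_pos.
  assert (ln z < 0). { rewrite <- ln_1. apply ln_increasing; lra. }
  rewrite <- exp_0. left. apply exp_increasing. nra.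
Qed.

Lemma rpow_small p eps : p > 0 -> eps > 0 -> exists d, d > 0 /\ forall z, 0 < z < d -> Rpower z p < eps.
Proof.
  intros Hp He. exists (exp (ln eps / p)). split. apply exp_pos.
  intros z Hz. unfold Rpower.
  assert (ln z < ln eps / p). { rewrite <- (ln_exp (ln eps / p)). apply ln_increasing; lra. }
  rewrite <- (exp_ln eps) by lra. apply exp_increasing.
  apply (Rmult_lt_compat_l p) in H; [|lra].
  replace (p * (ln eps / p)) with (ln eps) in H by (field; lra). lra.
Qed.

Lemma pow_le1' z m : 0 <= z <= 1 -> 0 <= z ^ m <= 1.
Proof. intros H. induction m; simpl. lra. nra. Qed.

Definition gfun (a b : R) (m l : nat) (x : R) : R := jweight a b x * x ^ m * (1 - x) ^ l.

Lemma gfun_bound a b m l x : a > -1 -> b > -1 -> 0 < x < 1 ->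
  0 <= gfun a b (S m) (S l) x <= Rpower x (b + 1) /\ gfun a b (S m) (S l) x <= Rpower (1 - x) (a + 1).
Proof.
  intros Ha Hb Hx.
  assert (E : gfun a b (S m) (S l) x = Rpower (1 - x) (a + 1) * Rpower x (b + 1) * (x ^ m * (1 - x) ^ l)).
  { unfold gfun, jweight. rewrite !Rpower_plus. rewrite !Rpower_1 by lra. simpl pow. ring. }
  rewrite E.
  destruct (rpow_le1 (1 - x) (a + 1)) as [P1a P1b]; [lra|lra|].
  destruct (rpow_le1 x (b + 1)) as [P2a P2b]; [lra|lra|].
  destruct (pow_le1' x m) as [U1 U2]; [lra|].
  destruct (pow_le1' (1 - x) l) as [V1 V2]; [lra|].
  assert (0 <= x ^ m * (1 - x) ^ l <= 1) by nra.
  set (w := x ^ m * (1 - x) ^ l) in *.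
  assert (0 <= Rpower (1 - x) (a + 1) * w <= 1) by (split; nra).
  assert (0 <= Rpower x (b + 1) * w <= 1) by (split; nra).
  split; [split|].
  - apply Rmult_le_pos; [apply Rmult_le_pos|]; lra.
  - replace (Rpower (1 - x) (a + 1) * Rpower x (b + 1) * w) with (Rpower x (b + 1) * (Rpower (1 - x) (a + 1) * w)) by ring. nra.
  - replace (Rpower (1 - x) (a + 1) * Rpower x (b + 1) * w) with (Rpower (1 - x) (a + 1) * (Rpower x (b + 1) * w)) by ring. nra.
Qed.

Definition lim0 (F : R -> R) := forall eps, eps > 0 -> exists d, d > 0 /\ forall x, 0 < x < d -> Rabs (F x) < eps.
Definition lim1 (F : R -> R) := forall eps, eps > 0 -> exists d, d > 0 /\ forall x, 1 - d < x < 1 -> Rabs (F x) < eps.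

Lemma gfun_lim0 a b m l : a > -1 -> b > -1 -> lim0 (gfun a b (S m) (S l)).
Proof.
  intros Ha Hb eps He. destruct (rpow_small (b + 1) eps) as [d [Hd K]]; [lra|lra|].
  exists (Rmin d (1/2)). split. { unfold Rmin; destruct Rle_dec; lra. }
  intros x Hx. assert (d >= Rmin d (1/2) /\ 1/2 >= Rmin d (1/2)) by (unfold Rmin; destruct Rle_dec; lra).
  destruct (gfun_bound a b m l x) as [[B1 B2] B3]; try lra.
  rewrite Rabs_right by lra. specialize (K x). lra.
Qed.

Lemma gfun_lim1 a b m l : a > -1 -> b > -1 -> lim1 (gfun a b (S m) (S l)).
Proof.
  intros Ha Hb eps He. destruct (rpow_small (a + 1) eps) as [d [Hd K]]; [lra|lra|].
  exists (Rmin d (1/2)). split. { unfold Rmin; destruct Rle_dec; lra. }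
  intros x Hx. assert (d >= Rmin d (1/2) /\ 1/2 >= Rmin d (1/2)) by (unfold Rmin; destruct Rle_dec; lra).
  destruct (gfun_bound a b m l x) as [[B1 B2] B3]; try lra.
  rewrite Rabs_right by lra. specialize (K (1 - x)). lra.
Qed.

Lemma impR_step f h F S u v w : v > 0 -> Rabs w <= 1 -> impR f S -> lim0 F -> lim1 F ->
  (forall a b, 0 < a < 1 -> 0 < b < 1 -> ex_RInt h a b /\ RInt h a b = (u * RInt f a b + w * (F b - F a)) / v) ->
  impR h (u * S / v).
Proof.
  intros Hv Hw Hf H0 H1 HE eps He.
  destruct (Hf (eps * v / (2 * (Rabs u + 1)))) as [d1 [Hd1 K1]].
  { assert (0 <= Rabs u) by apply Rabs_pos. apply Rdiv_lt_0_compat; nra. }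
  destruct (H0 (eps * v / 4)) as [d2 [Hd2 K2]]; [nra|].
  destruct (H1 (eps * v / 4)) as [d3 [Hd3 K3]]; [nra|].
  set (d := Rmin (Rmin d1 d2) (Rmin d3 (1/2))).
  assert (d1 >= d /\ d2 >= d /\ d3 >= d /\ 1/2 >= d /\ d > 0) by (unfold d, Rmin; repeat destruct Rle_dec; lra).
  exists d. split; [lra|]. intros a b Ha Hb.
  destruct (K1 a b) as [E1 A1]; [lra|lra|].
  destruct (HE a b) as [E2 A2]; [lra|lra|].
  split; auto. rewrite A2.
  specialize (K2 a ltac:(lra)). specialize (K3 b ltac:(lra)).
  replace ((u * RInt f a b + w * (F b - F a)) / v - u * S / v)
    with ((u * (RInt f a b - S) + w * (F b - F a)) / v) by (field; lra).
  unfold Rdiv. rewrite Rabs_mult, Rabs_inv, (Rabs_right v) by lra.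
  apply (Rmult_lt_reg_r v); [lra|]. rewrite Rmult_assoc, Rinv_l, Rmult_1_r by lra.
  apply Rle_lt_trans with (Rabs (u * (RInt f a b - S)) + Rabs (w * (F b - F a))); [apply Rabs_triang|].
  rewrite !Rabs_mult.
  assert (Rabs (F b - F a) <= Rabs (F b) + Rabs (F a)).
  { unfold Rminus. rewrite <- (Rabs_Ropp (F a)). apply Rabs_triang. }
  assert (0 <= Rabs u) by apply Rabs_pos. assert (0 <= Rabs w) by apply Rabs_pos.
  assert (0 <= Rabs (RInt f a b - S)) by apply Rabs_pos.
  assert (0 <= Rabs (F b - F a)) by apply Rabs_pos.
  assert (Hu : Rabs u * Rabs (RInt f a b - S) <= (Rabs u + 1) * (eps * v / (2 * (Rabs u + 1)))) by nra.
  replace ((Rabs u + 1) * (eps * v / (2 * (Rabs u + 1)))) with (eps * v / 2) in Hu by (field; lra).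
  nra.
Qed.

Lemma g_der a b m l x : 0 < x < 1 -> is_derive (gfun a b (S m) (S l)) x ((b + INR m + 1) * gfun a b m (S l) x - (a + INR l + 1) * gfun a b (S m) l x).
Proof. intros H. unfold gfun, jweight, Rpower. auto_derive.
- lra.
- change (match m with 0%nat => 1 | S _ => INR m + 1 end) with (INR (S m)).
  change (match l with 0%nat => 1 | S _ => INR l + 1 end) with (INR (S l)).
  rewrite !S_INR. replace (1 + - x) with (1 - x) by ring. simpl pow. field. lra.
Qed.

Lemma g_exd a b m l x : 0 < x < 1 -> ex_derive (gfun a b m l) x.
Proof. intros H. unfold gfun, jweight, Rpower. auto_derive. lra. Qed.

Lemma in01 a b z : 0 < a < 1 -> 0 < b < 1 -> Rmin a b <= z <= Rmax a b -> 0 < z < 1.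
Proof. intros. unfold Rmin, Rmax in *. destruct Rle_dec; lra. Qed.

Lemma g_exR a b m l u v : 0 < u < 1 -> 0 < v < 1 -> ex_RInt (gfun a b m l) u v.
Proof. intros Hu Hv. apply (@ex_RInt_continuous R_CompleteNormedModule). intros z Hz. apply (@ex_derive_continuous R_AbsRing R_NormedModule), g_exd.
  apply (in01 u v); auto. Qed.

Lemma RInt_lin2 f g p q u v : ex_RInt f u v -> ex_RInt g u v ->
  RInt (fun x => p * f x - q * g x) u v = p * RInt f u v - q * RInt g u v.
Proof.
  intros Hf Hg.
  assert (E1 : ex_RInt (fun x => p * f x) u v) by exact (ex_RInt_scal f u v p Hf).
  assert (E2 : ex_RInt (fun x => q * g x) u v) by exact (ex_RInt_scal g u v q Hg).
  assert (R1 : RInt (fun x => p * f x - q * g x) u v = RInt (fun x => p * f x) u v - RInt (fun x => q * g x) u v)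
    by exact (RInt_minus _ _ u v E1 E2).
  rewrite R1.
  assert (R2 : RInt (fun x => p * f x) u v = p * RInt f u v) by exact (RInt_scal f u v p Hf).
  assert (R3 : RInt (fun x => q * g x) u v = q * RInt g u v) by exact (RInt_scal g u v q Hg).
  rewrite R2, R3. reflexivity.
Qed.

Lemma g_ftc a b m l u v : 0 < u < 1 -> 0 < v < 1 ->
  (b + INR m + 1) * RInt (gfun a b m (S l)) u v - (a + INR l + 1) * RInt (gfun a b (S m) l) u v
  = gfun a b (S m) (S l) v - gfun a b (S m) (S l) u.
Proof.
  intros Hu Hv. rewrite <- RInt_lin2 by (apply g_exR; auto).
  apply is_RInt_unique. apply (is_RInt_derive (gfun a b (S m) (S l))).
  - intros x Hx. apply g_der. apply (in01 u v); auto.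
  - intros x Hx. apply (@ex_derive_continuous R_AbsRing R_NormedModule). assert (0 < x < 1) by (apply (in01 u v); auto).
    unfold gfun, jweight, Rpower. auto_derive. lra.
Qed.

Lemma g_split a b m l u v : 0 < u < 1 -> 0 < v < 1 ->
  RInt (gfun a b m l) u v = RInt (gfun a b (S m) l) u v + RInt (gfun a b m (S l)) u v.
Proof.
  intros Hu Hv.
  rewrite (RInt_ext (gfun a b m l) (fun x => gfun a b (S m) l x + gfun a b m (S l) x)).
  - exact (RInt_plus _ _ u v (g_exR a b (S m) l u v Hu Hv) (g_exR a b m (S l) u v Hu Hv)).
  - intros x _. unfold gfun. change (jweight a b x * x ^ m * (1 - x) ^ l = jweight a b x * x ^ (S m) * (1 - x) ^ l + jweight a b x * x ^ m * (1 - x) ^ (S l)). simpl pow. ring.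
Qed.

Lemma impR_val f l1 l2 : impR f l1 -> l1 = l2 -> impR f l2.
Proof. intros H E; subst; auto. Qed.

Lemma stepP a b m l S0 : a > -1 -> b > -1 -> impR (gfun a b m l) S0 ->
  impR (gfun a b (S m) l) ((b + INR m + 1) * S0 / (a + b + INR m + INR l + 2)).
Proof.
  intros Ha Hb H. apply (impR_step (gfun a b m l) _ (gfun a b (S m) (S l)) S0 _ _ (-1)); auto.
  - pose proof (pos_INR m); pose proof (pos_INR l); lra.
  - rewrite Rabs_left by lra; lra.
  - apply gfun_lim0; auto.
  - apply gfun_lim1; auto.
  - intros u v Hu Hv. split. apply g_exR; auto.
    rewrite (g_split a b m l u v Hu Hv). rewrite <- (g_ftc a b m l u v Hu Hv).
    pose proof (pos_INR m); pose proof (pos_INR l).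
    assert (Hgen: forall P Q : R, P = ((b + INR m + 1) * (P + Q) + -1 * ((b + INR m + 1) * Q - (a + INR l + 1) * P)) / (a + b + INR m + INR l + 2)) by (intros; field; lra).
    exact (Hgen (RInt (gfun a b (S m) l) u v) (RInt (gfun a b m (S l)) u v)).
Qed.

Lemma stepQ a b m l S0 : a > -1 -> b > -1 -> impR (gfun a b m l) S0 ->
  impR (gfun a b m (S l)) ((a + INR l + 1) * S0 / (a + b + INR m + INR l + 2)).
Proof.
  intros Ha Hb H. apply (impR_step (gfun a b m l) _ (gfun a b (S m) (S l)) S0 _ _ 1); auto.
  - pose proof (pos_INR m); pose proof (pos_INR l); lra.
  - rewrite Rabs_R1; lra.
  - apply gfun_lim0; auto.
  - apply gfun_lim1; auto.
  - intros u v Hu Hv. split. apply g_exR; auto.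
    rewrite (g_split a b m l u v Hu Hv). rewrite <- (g_ftc a b m l u v Hu Hv).
    pose proof (pos_INR m); pose proof (pos_INR l).
    assert (Hgen: forall P Q : R, Q = ((a + INR l + 1) * (P + Q) + 1 * ((b + INR m + 1) * Q - (a + INR l + 1) * P)) / (a + b + INR m + INR l + 2)) by (intros; field; lra).
    exact (Hgen (RInt (gfun a b (S m) l) u v) (RInt (gfun a b m (S l)) u v)).
Qed.

Lemma impR_sub h l : impR h l -> impR (fun x => h (1 - x)) l.
Proof.
  intros H eps He. destruct (H eps He) as [d [Hd K]]. exists d. split; auto.
  intros a b Ha Hb. destruct (K (1 - b) (1 - a)) as [E A]; [lra|lra|].
  assert (E' : ex_RInt h (-1 * a + 1) (-1 * b + 1)).
  { replace (-1 * a + 1) with (1 - a) by ring. replace (-1 * b + 1) with (1 - b) by ring.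
    apply ex_RInt_swap; auto. }
  assert (C1 := ex_RInt_comp_lin h (-1) 1 a b E').
  assert (C2 := RInt_comp_lin h (-1) 1 a b E').
  assert (Ext : forall x, Rmin a b < x < Rmax a b -> opp (scal (-1) (h (-1 * x + 1))) = h (1 - x)).
  { intros x _. change (- (-1 * h (-1 * x + 1)) = h (1 - x)). replace (-1 * x + 1) with (1 - x) by ring. ring. }
  split.
  - exact (ex_RInt_ext _ (fun x => h (1 - x)) a b Ext (ex_RInt_opp _ a b C1)).
  - assert (R1 : RInt (fun x => h (1 - x)) a b = RInt (fun x => opp (scal (-1) (h (-1*x+1)))) a b)
      by exact (eq_sym (RInt_ext _ _ a b Ext)).
    assert (R2 : RInt (fun x => opp (scal (-1) (h (-1*x+1)))) a b = opp (RInt (fun y => scal (-1) (h (-1*y+1))) a b))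
      by exact (RInt_opp _ a b C1).
    assert (R3 : opp (RInt h (-1*a+1) (-1*b+1)) = RInt h (-1*b+1) (-1*a+1)) by exact (opp_RInt_swap _ _ _ E').
    assert (Ea : -1*a+1 = 1-a) by ring. assert (Eb : -1*b+1 = 1-b) by ring.
    rewrite Ea, Eb in R3, C2.
    assert (Fin : RInt (fun x => h (1 - x)) a b = RInt h (1 - b) (1 - a))
      by exact (eq_trans R1 (eq_trans R2 (eq_trans (f_equal opp C2) R3))).
    rewrite Fin. exact A.
Qed.

Lemma poch_pos c k : c > 0 -> poch c k > 0.
Proof. intros Hc. induction k; simpl. lra. pose proof (pos_INR k). nra. Qed.

Lemma poch_add c p q : poch c (p + q) = poch c p * poch (c + INR p) q.
Proof. induction q. rewrite Nat.add_0_r. simpl. ring.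
  rewrite Nat.add_succ_r. simpl. rewrite IHq, plus_INR. ring. Qed.

Lemma poch_Sl c k : poch c (S k) = c * poch (c + 1) k.
Proof. change (S k) with (1 + k)%nat. rewrite poch_add. simpl. replace (c + (0 + 1)) with (c + 1) by ring. ring. Qed.

Definition Jv (a b B : R) (m l : nat) : R := B * poch (b + 1) m * poch (a + 1) l / poch (a + b + 2) (m + l).

Lemma Jv_imp a b B : a > -1 -> b > -1 -> impR (gfun a b 0 0) B ->
  forall l m, impR (gfun a b m l) (Jv a b B m l).
Proof.
  intros Ha Hb H0. induction l as [|l IH]; intros m.
  - induction m as [|m IHm].
    + apply (impR_val _ B). exact H0. unfold Jv. simpl. field.
    + apply (impR_val _ _ _ (stepP a b m 0 _ Ha Hb IHm)).
      unfold Jv. rewrite Nat.add_0_r. simpl (S m + 0)%nat. rewrite Nat.add_0_r. simpl poch.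
      assert (poch (b + 1) m > 0) by (apply poch_pos; lra).
      assert (poch (a + b + 2) m > 0) by (apply poch_pos; lra).
      pose proof (pos_INR m). change (INR 0) with 0. field. lra.
  - apply (impR_val _ _ _ (stepQ a b m l _ Ha Hb (IH m))).
    unfold Jv. rewrite Nat.add_succ_r. simpl poch. rewrite plus_INR.
    assert (poch (a + 1) l > 0) by (apply poch_pos; lra).
    assert (poch (a + b + 2) (m + l) > 0) by (apply poch_pos; lra).
    pose proof (pos_INR m). pose proof (pos_INR l). field. lra.
Qed.

Lemma base_imp a b B : improper_int01 (fun t => Rpower t a * Rpower (1 - t) b) B -> impR (gfun a b 0 0) B.
Proof.
  intros H. apply imp_impR, impR_sub in H. revert H. apply impR_ext.
  intros x Hx. unfold gfun, jweight. simpl. replace (1 - (1 - x)) with x by ring. ring.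
Qed.

Definition Pp (a b : R) (n s : nat) : R := poch (b + 1) s * poch (a + 1) (2 * n - s).
Definition Gr (a b B : R) (n j k : nat) : R :=
  B / poch (a + b + 2) (2 * n) * Binomial.C n j * Binomial.C n k * Pp a b n (j + k).

Lemma dual_eq n a b c B : a > -1 -> b > -1 -> is_dual_coeffs n a b c ->
  impR (gfun a b 0 0) B ->
  forall i k, (i <= n)%nat -> (k <= n)%nat ->
  sum_f_R0 (fun j => c i j * Gr a b B n j k) n = if Nat.eqb i k then 1 else 0.
Proof.
  intros Ha Hb Hd H0 i k Hi Hk.
  pose proof (imp_impR _ _ (Hd i k Hi Hk)) as H1.
  set (F := fun j x => c i j * Binomial.C n j * Binomial.C n k * gfun a b (j + k) ((n - j) + (n - k)) x).
  assert (H2 : impR (fun x => sum_f_R0 (fun j => F j x) n)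
     (sum_f_R0 (fun j => c i j * Binomial.C n j * Binomial.C n k * Jv a b B (j + k) ((n - j) + (n - k))) n)).
  { apply impR_sum. intros j Hj. unfold F. apply impR_scal. apply Jv_imp; auto. }
  assert (H3 : impR (fun x => jweight a b x * bezier n c i x * bern n k x)
     (sum_f_R0 (fun j => c i j * Binomial.C n j * Binomial.C n k * Jv a b B (j + k) ((n - j) + (n - k))) n)).
  { revert H2. apply impR_ext. intros x Hx. unfold bezier.
    rewrite Rmult_comm, <- Rmult_assoc, (Rmult_comm (bern n k x)), scal_sum.
    apply sum_eq. intros j Hj. unfold F, gfun, bern. rewrite !pow_add. ring. }
  rewrite <- (impR_unique _ _ _ H3 H1). apply sum_eq. intros j Hj.
  unfold Gr, Jv, Pp.
  replace (j + k + (n - j + (n - k)))%nat with (2 * n)%nat by lia.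
  replace (n - j + (n - k))%nat with (2 * n - (j + k))%nat by lia. field.
  assert (poch (a + b + 2) (2 * n) > 0) by (apply poch_pos; lra). lra.
Qed.

Lemma sum_shift (g : nat -> R) n : sum_f_R0 (fun l => g (S l)) n + g 0%nat = sum_f_R0 g n + g (S n).
Proof. induction n; simpl. ring. simpl in IHn. lra. Qed.

Lemma sum_zero (F : nat -> R) n : (forall l, (l <= n)%nat -> F l = 0) -> sum_f_R0 F n = 0.
Proof. intros H. induction n; simpl. apply H; lia. rewrite IHn, H; [ring|lia|intros; apply H; lia]. Qed.

Lemma sum_scal_l r (F : nat -> R) n : sum_f_R0 (fun l => r * F l) n = r * sum_f_R0 F n.
Proof. induction n; simpl. ring. rewrite IHn. ring. Qed.

Lemma sum_plus2 (F G : nat -> R) n : sum_f_R0 (fun l => F l + G l) n = sum_f_R0 F n + sum_f_R0 G n.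
Proof. induction n; simpl. ring. rewrite IHn. ring. Qed.

Lemma sum_swap (F : nat -> nat -> R) n m :
  sum_f_R0 (fun i => sum_f_R0 (fun j => F i j) m) n = sum_f_R0 (fun j => sum_f_R0 (fun i => F i j) n) m.
Proof. induction n; simpl. reflexivity. rewrite IHn. rewrite <- sum_plus2. reflexivity. Qed.

Lemma sum_delta (F : nat -> R) n k : (k <= n)%nat ->
  sum_f_R0 (fun j => F j * (if Nat.eqb j k then 1 else 0)) n = F k.
Proof.
  intros Hk. induction n; cbn [sum_f_R0].
  - assert (k = 0%nat) by lia. subst. simpl. ring.
  - destruct (Nat.eq_dec k (S n)) as [E|E].
    + subst. rewrite Nat.eqb_refl. rewrite sum_zero. ring.
      intros l Hl. replace (Nat.eqb l (S n)) with false by (symmetry; apply Nat.eqb_neq; lia). ring.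
    + rewrite IHn by lia. replace (Nat.eqb (S n) k) with false by (symmetry; apply Nat.eqb_neq; lia). ring.
Qed.

Fixpoint lowdeg (d : nat) (q : nat -> R) : Prop :=
  match d with O => forall j, q j = 0 | S d' => lowdeg d' (fun j => q (S j) - q j) end.

Lemma ld_ext d : forall p q, (forall j, p j = q j) -> lowdeg d p -> lowdeg d q.
Proof. induction d; simpl; intros p q E H.
  - intros j. rewrite <- E. auto.
  - apply (IHd (fun j => p (S j) - p j)); [intros j; rewrite !E; reflexivity | exact H]. Qed.

Lemma ld_plus d : forall p q, lowdeg d p -> lowdeg d q -> lowdeg d (fun j => p j + q j).
Proof. induction d; simpl; intros p q Hp Hq.
  - intros j. rewrite Hp, Hq. ring.
  - apply (ld_ext _ (fun j => (p (S j) - p j) + (q (S j) - q j))). intros; ring. apply IHd; auto. Qed.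

Lemma ld_scal d : forall r p, lowdeg d p -> lowdeg d (fun j => r * p j).
Proof. induction d; simpl; intros r p Hp.
  - intros j. rewrite Hp. ring.
  - apply (ld_ext _ (fun j => r * (p (S j) - p j))). intros; ring. apply IHd; auto. Qed.

Lemma ld_mono d : forall p, lowdeg d p -> lowdeg (S d) p.
Proof. induction d; intros p Hp.
  - simpl in *. intros j. rewrite !Hp. ring.
  - change (lowdeg (S d) (fun j => p (S j) - p j)). apply IHd. exact Hp. Qed.

Lemma ld_mono_le d d' p : (d <= d')%nat -> lowdeg d p -> lowdeg d' p.
Proof. intros H. induction H; auto. intros; apply ld_mono; auto. Qed.

Lemma ld_const r : lowdeg 1 (fun _ => r).
Proof. simpl. intros; ring. Qed.

Lemma ld_lin d : forall e f q, lowdeg d q -> lowdeg (S d) (fun j => (e + f * INR j) * q j).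
Proof. induction d; intros e f q Hq.
  - simpl in *. intros j. rewrite !Hq. ring.
  - change (lowdeg (S d) (fun j => (e + f * INR (S j)) * q (S j) - (e + f * INR j) * q j)).
    apply (ld_ext _ (fun j => ((e + f) + f * INR j) * (q (S j) - q j) + f * q j)).
    { intros j. rewrite S_INR. ring. }
    apply ld_plus.
    + apply (IHd (e + f) f (fun j => q (S j) - q j)). exact Hq.
    + apply ld_scal. exact Hq.
Qed.

Lemma ld_poch d e f m q : lowdeg d q -> lowdeg (d + m) (fun j => q j * poch (e + f * INR j) m).
Proof. intros Hq. induction m.
  - rewrite Nat.add_0_r. apply (ld_ext _ q); auto. intros; simpl; ring.
  - rewrite Nat.add_succ_r. apply (ld_ext _ (fun j => ((e + INR m) + f * INR j) * (q j * poch (e + f * INR j) m))).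
    { intros j. simpl. ring. }
    apply ld_lin. exact IHm.
Qed.

Definition cb (n l : nat) : R := if Nat.leb l n then Binomial.C n l else 0.

Lemma C_n_0' n : Binomial.C n 0 = 1.
Proof. unfold Binomial.C. rewrite Nat.sub_0_r. simpl fact. pose proof (INR_fact_neq_0 n). simpl INR. field. auto. Qed.
Lemma C_n_n' n : Binomial.C n n = 1.
Proof. unfold Binomial.C. rewrite Nat.sub_diag. simpl fact. pose proof (INR_fact_neq_0 n). simpl INR. field. auto. Qed.

Lemma cb_pascal n l : cb (S n) (S l) = cb n l + cb n (S l).
Proof. unfold cb. destruct (Nat.leb_spec (S l) (S n)); destruct (Nat.leb_spec l n); destruct (Nat.leb_spec (S l) n); try lia.
  - rewrite <- pascal by lia. ring.
  - assert (l = n) by lia. subst. rewrite !C_n_n'. ring.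
  - ring.
Qed.

Lemma cb_0 n : cb n 0 = 1.
Proof. unfold cb. simpl. apply C_n_0'. Qed.

Lemma sumC_cb n (F : nat -> nat -> R) : sum_f_R0 (fun l => F l O * Binomial.C n l) n = sum_f_R0 (fun l => F l O * cb n l) n.
Proof. apply sum_eq. intros l Hl. unfold cb. destruct (Nat.leb_spec l n); [reflexivity|lia]. Qed.

Lemma PASC n (q : nat -> R) :
  sum_f_R0 (fun l => (-1) ^ l * Binomial.C (S n) l * q l) (S n) =
  - sum_f_R0 (fun l => (-1) ^ l * Binomial.C n l * (q (S l) - q l)) n.
Proof.
  assert (E1 : sum_f_R0 (fun l => (-1) ^ l * Binomial.C (S n) l * q l) (S n) = sum_f_R0 (fun l => (-1) ^ l * cb (S n) l * q l) (S n)).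
  { apply sum_eq. intros l Hl. unfold cb. destruct (Nat.leb_spec l (S n)); [reflexivity|lia]. }
  assert (E2 : sum_f_R0 (fun l => (-1) ^ l * Binomial.C n l * (q (S l) - q l)) n = sum_f_R0 (fun l => (-1) ^ l * cb n l * (q (S l) - q l)) n).
  { apply sum_eq. intros l Hl. unfold cb. destruct (Nat.leb_spec l n); [reflexivity|lia]. }
  rewrite E1, E2.
  set (h := fun l => (-1) ^ l * cb n l * q l).
  set (G2 := fun l => (-1) ^ l * cb (S n) l * q l).
  set (X := fun l => (-1) ^ l * cb n l * q (S l)).
  assert (Hn : h (S n) = 0). { unfold h, cb. destruct (Nat.leb_spec (S n) n); [lia|ring]. }
  assert (L1 : sum_f_R0 G2 (S n) = sum_f_R0 (fun l => G2 (S l)) n + G2 0%nat).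
  { rewrite sum_shift. reflexivity. }
  assert (L2 : sum_f_R0 (fun l => G2 (S l)) n = sum_f_R0 (fun l => (-1) * X l + h (S l)) n).
  { apply sum_eq. intros l Hl. unfold G2, X, h. rewrite cb_pascal. simpl pow. ring. }
  assert (L3 := sum_shift h n).
  assert (L4 : sum_f_R0 (fun l => (-1) ^ l * cb n l * (q (S l) - q l)) n = sum_f_R0 (fun l => X l + (-1) * h l) n).
  { apply sum_eq. intros l Hl. unfold X, h. ring. }
  assert (L5 : G2 0%nat = h 0%nat). { unfold G2, h. rewrite !cb_0. ring. }
  change (sum_f_R0 G2 (S n) = - sum_f_R0 (fun l => (-1) ^ l * cb n l * (q (S l) - q l)) n).
  rewrite L1, L2, L4, !sum_plus2, !sum_scal_l. lra.
Qed.

Lemma ALT n : forall q, lowdeg n q -> sum_f_R0 (fun l => (-1) ^ l * Binomial.C n l * q l) n = 0.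
Proof.
  induction n; intros q Hq.
  - simpl in *. rewrite Hq. ring.
  - rewrite PASC. rewrite IHn. ring. exact Hq.
Qed.

Lemma poch1_fact n : poch 1 n = INR (fact n).
Proof. induction n. reflexivity. simpl poch. rewrite IHn. rewrite fact_simpl, mult_INR, S_INR. ring. Qed.

Lemma INVS x : x > 0 -> forall n m,
  sum_f_R0 (fun l => (-1) ^ l * Binomial.C n l * / poch (x + INR l) m) n = poch (INR m) n / poch x (m + n).
Proof.
  intros Hx. induction n; intros m.
  - simpl. rewrite C_n_0', Nat.add_0_r. replace (x + 0) with x by ring. field.
    pose proof (poch_pos x m Hx). lra.
  - rewrite PASC.
    rewrite (sum_eq _ (fun l => (- INR m) * ((-1) ^ l * Binomial.C n l * / poch (x + INR l) (S m)))).
    + rewrite sum_scal_l, IHn. rewrite poch_Sl. rewrite Nat.add_succ_r. simpl (S m + n)%nat. rewrite S_INR.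
      simpl poch. unfold Rdiv. ring.
    + intros l Hl. rewrite S_INR.
      pose proof (pos_INR l). pose proof (pos_INR m).
      set (A := x + INR l).
      assert (HA : A > 0) by (unfold A; lra).
      replace (x + (INR l + 1)) with (A + 1) by (unfold A; ring).
      assert (H1 := poch_pos A m HA).
      assert (H2 := poch_pos (A + 1) m ltac:(lra)).
      assert (E1 : poch A (S m) = A * poch (A + 1) m) by apply poch_Sl.
      assert (E2 : poch A (S m) = poch A m * (A + INR m)) by reflexivity.
      assert (H3 : poch A (S m) > 0) by (apply poch_pos; lra).
      replace (/ poch (A + 1) m) with (A * / poch A (S m)) by (rewrite E1; field; lra).
      replace (/ poch A m) with ((A + INR m) * / poch A (S m)) by (rewrite E2; field; lra).
      ring.
Qed.

Lemma DIV b0 y0 m : exists Rr : nat -> R, lowdeg m Rr /\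
  forall l, poch (b0 - (y0 + INR l)) m = poch b0 m + (y0 + INR l) * Rr l.
Proof.
  induction m.
  - exists (fun _ => 0). split. simpl. auto. intros; simpl; ring.
  - destruct IHm as [Rr [HR HE]].
    exists (fun l => ((b0 + INR m - y0) + (-1) * INR l) * Rr l + (-1) * poch b0 m).
    split.
    + apply ld_plus. apply ld_lin. exact HR. apply ld_scal. apply (ld_mono_le 1). lia. apply ld_const.
    + intros l. simpl poch. rewrite HE. ring.
Qed.

Definition dl (i k : nat) : R := if Nat.eqb i k then 1 else 0.
Lemma dl_sym i k : dl i k = dl k i.
Proof. unfold dl. rewrite Nat.eqb_sym. reflexivity. Qed.

Definition DualH n (c G : nat -> nat -> R) := forall i k, (i <= n)%nat -> (k <= n)%nat ->
  sum_f_R0 (fun j => c i j * G j k) n = dl i k.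
Definition SymH (G : nat -> nat -> R) := forall j k, G j k = G k j.

Lemma sum_mul_r (F : nat -> R) r n : sum_f_R0 (fun l => F l * r) n = sum_f_R0 F n * r.
Proof. induction n; simpl. ring. rewrite IHn. ring. Qed.

Lemma c_sym n c G : DualH n c G -> SymH G -> forall i k, (i <= n)%nat -> (k <= n)%nat -> c i k = c k i.
Proof.
  intros HD HS i k Hi Hk.
  transitivity (sum_f_R0 (fun m => c i m * dl m k) n).
  { symmetry. apply (sum_delta (c i)). auto. }
  transitivity (sum_f_R0 (fun m => sum_f_R0 (fun j => c i m * G m j * c k j) n) n).
  { apply sum_eq. intros m Hm. rewrite dl_sym, <- (HD k m) by auto.
    rewrite scal_sum. apply sum_eq. intros j Hj. rewrite (HS j m). ring. }
  rewrite sum_swap.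
  transitivity (sum_f_R0 (fun j => c k j * dl j i) n).
  { apply sum_eq. intros j Hj. rewrite sum_mul_r, HD by auto. rewrite dl_sym. ring. }
  apply (sum_delta (c k)). auto.
Qed.

Lemma Gc_id n c G : DualH n c G -> SymH G -> forall i k, (i <= n)%nat -> (k <= n)%nat ->
  sum_f_R0 (fun j => G i j * c j k) n = dl i k.
Proof.
  intros HD HS i k Hi Hk. rewrite dl_sym, <- (HD k i) by auto.
  apply sum_eq. intros j Hj. rewrite (c_sym n c G HD HS j k) by auto. rewrite (HS i j). ring.
Qed.

Lemma row_solve n c G : DualH n c G -> SymH G -> forall (Rw e : nat -> R),
  (forall k, (k <= n)%nat -> sum_f_R0 (fun l => Rw l * G l k) n = e k) ->
  forall m, (m <= n)%nat -> Rw m = sum_f_R0 (fun k => e k * c k m) n.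
Proof.
  intros HD HS Rw e HR m Hm.
  transitivity (sum_f_R0 (fun l => Rw l * dl l m) n).
  { symmetry. apply (sum_delta Rw). auto. }
  transitivity (sum_f_R0 (fun l => sum_f_R0 (fun k => Rw l * G l k * c k m) n) n).
  { apply sum_eq. intros l Hl. rewrite <- (Gc_id n c G HD HS l m) by auto.
    rewrite scal_sum. apply sum_eq. intros k Hk. ring. }
  rewrite sum_swap. apply sum_eq. intros k Hk. rewrite sum_mul_r, HR by auto. reflexivity.
Qed.

Definition vrow (a b B : R) (n l : nat) : R :=
  poch (a + b + 1 + 1) n * poch (b + 2) n / (INR (fact n) * B) *
  ((-1) ^ l / (poch (a + 1) (n - l) * poch (b + 2) l)).

Lemma ratio_S a b n l k : a > -1 -> b > -1 -> (l <= n)%nat -> (S k <= n)%nat ->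
  Pp a b n (l + S k) / (poch (a + 1) (n - l) * poch (b + 2) l) =
  (b + 1) * (1 * poch (b + 2 + 1 * INR l) k * poch ((a + 1 + INR n) + (-1) * INR l) (n - S k)).
Proof.
  intros Ha Hb Hl Hk. unfold Pp.
  replace (l + S k)%nat with (S l + k)%nat by lia.
  replace (2 * n - (S l + k))%nat with ((n - l) + (n - S k))%nat by lia.
  rewrite !poch_add, poch_Sl, minus_INR by lia. rewrite S_INR.
  replace (b + 1 + (INR l + 1)) with (b + 2 + 1 * INR l) by ring.
  replace (b + 1 + 1) with (b + 2) by ring.
  replace (a + 1 + (INR n - INR l)) with (a + 1 + INR n + -1 * INR l) by ring.
  assert (poch (a + 1) (n - l) > 0) by (apply poch_pos; lra).
  assert (poch (b + 2) l > 0) by (apply poch_pos; lra).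
  field. lra.
Qed.

Lemma ratio_0 a b n l : a > -1 -> b > -1 -> (l <= n)%nat ->
  Pp a b n (l + 0) / (poch (a + 1) (n - l) * poch (b + 2) l) =
  (b + 1) / (b + 1 + INR l) * poch ((a + b + 2 + INR n) - ((b + 1) + INR l)) n.
Proof.
  intros Ha Hb Hl. unfold Pp. rewrite Nat.add_0_r.
  replace (2 * n - l)%nat with ((n - l) + n)%nat by lia.
  rewrite poch_add, minus_INR by lia.
  replace (a + 1 + (INR n - INR l)) with ((a + b + 2 + INR n) - ((b + 1) + INR l)) by ring.
  assert (E1 : poch (b + 1) (S l) = (b + 1) * poch (b + 1 + 1) l) by apply poch_Sl.
  assert (E2 : poch (b + 1) (S l) = poch (b + 1) l * (b + 1 + INR l)) by reflexivity.
  replace (b + 1 + 1) with (b + 2) in E1 by ring.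
  assert (poch (a + 1) (n - l) > 0) by (apply poch_pos; lra).
  assert (poch (b + 2) l > 0) by (apply poch_pos; lra).
  assert (poch (b + 1) l > 0) by (apply poch_pos; lra).
  pose proof (pos_INR l).
  assert (E3 : poch (b + 1) l = (b + 1) * poch (b + 2) l / (b + 1 + INR l)).
  { apply (Rmult_eq_reg_r (b + 1 + INR l)); [|lra]. rewrite <- E2, E1. field. lra. }
  rewrite E3. field. lra.
Qed.

Lemma sumk a b n k : a > -1 -> b > -1 -> (k <= n)%nat ->
  sum_f_R0 (fun l => (-1) ^ l * Binomial.C n l * (Pp a b n (l + k) / (poch (a + 1) (n - l) * poch (b + 2) l))) n
  = if Nat.eqb k 0 then INR (fact n) * poch (a + b + 2 + INR n) n / poch (b + 2) n else 0.
Proof.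
  intros Ha Hb Hk. destruct k as [|k].
  - simpl Nat.eqb. cbv iota.
    destruct (DIV (a + b + 2 + INR n) (b + 1) n) as [Rr [HR HE]].
    rewrite (sum_eq _ (fun l => (b + 1) * poch (a + b + 2 + INR n) n * ((-1) ^ l * Binomial.C n l * / poch (b + 1 + INR l) 1)
                              + (b + 1) * ((-1) ^ l * Binomial.C n l * Rr l))).
    + rewrite sum_plus2, !sum_scal_l, INVS by lra. rewrite ALT by auto.
      rewrite poch1_fact. simpl (1 + n)%nat. rewrite (poch_Sl (b + 1) n).
      replace (b + 1 + 1) with (b + 2) by ring.
      assert (poch (b + 2) n > 0) by (apply poch_pos; lra).
      field. lra.
    + intros l Hl. rewrite ratio_0 by auto. rewrite HE. simpl poch.
      pose proof (pos_INR l). field. lra.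
  - simpl Nat.eqb. cbv iota.
    rewrite (sum_eq _ (fun l => (-1) ^ l * Binomial.C n l *
       ((b + 1) * (1 * poch (b + 2 + 1 * INR l) k * poch ((a + 1 + INR n) + (-1) * INR l) (n - S k))))).
    + apply ALT. apply ld_scal. apply (ld_mono_le (1 + k + (n - S k))). lia.
      apply ld_poch. apply ld_poch. apply ld_const.
    + intros l Hl. rewrite ratio_S by auto. reflexivity.
Qed.

Lemma Gr_sym a b B n : SymH (Gr a b B n).
Proof. intros j k. unfold Gr. rewrite Nat.add_comm. ring. Qed.

Lemma first_row n a b c B : a > -1 -> b > -1 -> B <> 0 -> DualH n c (Gr a b B n) ->
  forall j, (j <= n)%nat -> c 0%nat j = vrow a b B n j.
Proof.
  intros Ha Hb HB HD j Hj.
  rewrite (row_solve n c (Gr a b B n) HD (Gr_sym a b B n) (vrow a b B n) (dl 0)); auto.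
  - symmetry. transitivity (sum_f_R0 (fun k => c k j * dl k 0) n).
    + apply sum_eq. intros k Hk. rewrite dl_sym. ring.
    + apply (sum_delta (fun k => c k j)). lia.
  - intros k Hk.
    set (K0 := poch (a + b + 2) n * poch (b + 2) n / (INR (fact n) * B) * (B / poch (a + b + 2) (2 * n)) * Binomial.C n k).
    rewrite (sum_eq _ (fun l => K0 * ((-1) ^ l * Binomial.C n l * (Pp a b n (l + k) / (poch (a + 1) (n - l) * poch (b + 2) l))))).
    + rewrite sum_scal_l, sumk by auto. unfold dl, K0.
      destruct k as [|k].
      * simpl Nat.eqb. cbv iota. rewrite C_n_0'.
        replace (2 * n)%nat with (n + n)%nat by lia. rewrite poch_add.
        assert (poch (a + b + 2) n > 0) by (apply poch_pos; lra).
        assert (poch (a + b + 2 + INR n) n > 0) by (apply poch_pos; pose proof (pos_INR n); lra).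
        assert (poch (b + 2) n > 0) by (apply poch_pos; lra).
        pose proof (INR_fact_neq_0 n).
        field. repeat split; lra.
      * simpl Nat.eqb. cbv iota. ring.
    + intros l Hl. unfold vrow, Gr, K0. replace (a + b + 1 + 1) with (a + b + 2) by ring.
      replace (l + k)%nat with (l + k)%nat by reflexivity.
      assert (poch (a + b + 2) (2 * n) > 0) by (apply poch_pos; lra).
      assert (poch (a + 1) (n - l) > 0) by (apply poch_pos; lra).
      assert (poch (b + 2) l > 0) by (apply poch_pos; lra).
      pose proof (INR_fact_neq_0 n).
      field. repeat split; lra.
Qed.

Definition fq (n : nat) (a b x : R) : R := 2 * x * x + (- 2 * INR n - a + b) * x.
Definition Gdn (G : nat -> nat -> R) (l k : nat) : R := match l with O => 0 | S l' => G l' k end.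
Definition Gup (n : nat) (G : nat -> nat -> R) (l k : nat) : R := if Nat.ltb l n then G (S l) k else 0.

Definition Tf (a b : R) (n l k : nat) : R :=
  - INR l * (INR l + b) * Pp a b n (l + k - 1) - fq n a b (INR l) * Pp a b n (l + k)
  - (INR n - INR l) * (INR n - INR l + a) * Pp a b n (l + k + 1).

Lemma side_eq a b B n l k : (l <= n)%nat -> (k <= n)%nat ->
  Apol n b (INR l - 1) * Gdn (Gr a b B n) l k - fq n a b (INR l) * Gr a b B n l k
  + Bpol n a (INR l + 1) * Gup n (Gr a b B n) l k
  = B / poch (a + b + 2) (2 * n) * Binomial.C n l * Binomial.C n k * Tf a b n l k.
Proof.
  intros Hl Hk. unfold Tf, Gup, Gdn, Gr.
  set (K := B / poch (a + b + 2) (2 * n)).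
  assert (E1 : Apol n b (INR l - 1) * match l with O => 0 | S l' => K * Binomial.C n l' * Binomial.C n k * Pp a b n (l' + k) end
             = K * Binomial.C n l * Binomial.C n k * (- INR l * (INR l + b) * Pp a b n (l + k - 1))).
  { destruct l as [|l'].
    - simpl INR. ring.
    - rewrite (pascal_step3 n l') by lia. rewrite minus_INR by lia.
      replace (S l' + k - 1)%nat with (l' + k)%nat by lia.
      rewrite S_INR. unfold Apol. pose proof (pos_INR l'). field. lra. }
  assert (E2 : Bpol n a (INR l + 1) * (if Nat.ltb l n then K * Binomial.C n (S l) * Binomial.C n k * Pp a b n (S l + k) else 0)
             = K * Binomial.C n l * Binomial.C n k * (- (INR n - INR l) * (INR n - INR l + a) * Pp a b n (l + k + 1))).
  { destruct (Nat.ltb_spec l n).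
    - rewrite (pascal_step3 n l) by lia. rewrite minus_INR by lia.
      replace (S l + k)%nat with (l + k + 1)%nat by lia.
      rewrite S_INR. unfold Bpol. pose proof (pos_INR l). field. lra.
    - assert (l = n) by lia. subst. ring. }
  rewrite E1, E2. ring.
Qed.

Lemma Tf_sym a b n l k : (l <= n)%nat -> (k <= n)%nat -> Tf a b n l k = Tf a b n k l.
Proof.
  intros Hl Hk. destruct (Nat.eq_dec l k) as [E|E]. { subst; reflexivity. }
  unfold Tf. rewrite (Nat.add_comm k l).
  set (t := (l + k - 1)%nat). set (u := (2 * n - l - k - 1)%nat).
  assert (Ht : (t + 1 = l + k)%nat) by (unfold t; lia).
  assert (Hu : (u + l + k + 1 = 2 * n)%nat) by (unfold u; lia).
  replace (l + k)%nat with (S t) by lia. replace (S t + 1)%nat with (S (S t)) by lia.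
  replace (S t - 1)%nat with t by lia.
  unfold Pp.
  replace (2 * n - t)%nat with (S (S u)) by lia.
  replace (2 * n - S t)%nat with (S u) by lia.
  replace (2 * n - S (S t))%nat with u by lia.
  apply (f_equal INR) in Ht. apply (f_equal INR) in Hu.
  rewrite !plus_INR in Ht, Hu. rewrite mult_INR in Hu. simpl (INR 1) in *. simpl (INR 2) in Hu.
  cbn [poch]. rewrite !S_INR. unfold fq.
  rewrite ?plus_INR in Hu. assert (Et : INR t = INR l + INR k - 1) by lra.
  assert (Eu : INR u = 2 * INR n - INR l - INR k - 1) by lra.
  rewrite Et, Eu. ring.
Qed.

Lemma SYM a b B n l k : (l <= n)%nat -> (k <= n)%nat ->
  Apol n b (INR l - 1) * Gdn (Gr a b B n) l k - fq n a b (INR l) * Gr a b B n l k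
  + Bpol n a (INR l + 1) * Gup n (Gr a b B n) l k
  = Apol n b (INR k - 1) * Gdn (Gr a b B n) k l - fq n a b (INR k) * Gr a b B n k l
  + Bpol n a (INR k + 1) * Gup n (Gr a b B n) k l.
Proof. intros. rewrite !side_eq by auto. rewrite (Tf_sym a b n l k) by auto. ring. Qed.

Definition Rw (n : nat) (a b : R) (c : nat -> nat -> R) (i l : nat) : R :=
  Apol n b (INR i) * c (S i) l - fq n a b (INR i) * c i l + Bpol n a (INR i) * c (i - 1)%nat l
  - (Apol n b (INR l) * c i (S l) - fq n a b (INR l) * c i l + Bpol n a (INR l) * c i (l - 1)%nat).

Lemma sum6 (F1 F2 F3 F4 F5 F6 : nat -> R) p1 p2 p3 N :
  sum_f_R0 (fun l => p1 * F1 l - p2 * F2 l + p3 * F3 l - (F4 l - F5 l + F6 l)) N =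
  p1 * sum_f_R0 F1 N - p2 * sum_f_R0 F2 N + p3 * sum_f_R0 F3 N - (sum_f_R0 F4 N - sum_f_R0 F5 N + sum_f_R0 F6 N).
Proof. induction N; simpl. ring. rewrite IHN. ring. Qed.

Lemma sum3 (F4 F5 F6 : nat -> R) N :
  sum_f_R0 F4 N - sum_f_R0 F5 N + sum_f_R0 F6 N = sum_f_R0 (fun l => F4 l - F5 l + F6 l) N.
Proof. induction N; simpl. ring. rewrite <- IHN. ring. Qed.

Lemma Apol_n n b : Apol n b (INR n) = 0.
Proof. unfold Apol. ring. Qed.
Lemma Bpol_0 n a : Bpol n a 0 = 0.
Proof. unfold Bpol. ring. Qed.

Lemma dl1 x y : x = y -> dl x y = 1.
Proof. intros; subst; unfold dl; rewrite Nat.eqb_refl; reflexivity. Qed.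
Lemma dl0 x y : x <> y -> dl x y = 0.
Proof. intros H; unfold dl; destruct (Nat.eqb_spec x y); [lia|reflexivity]. Qed.

Ltac simpl_dl := repeat match goal with |- context [dl ?x ?y] =>
  first [rewrite (dl1 x y) by lia | rewrite (dl0 x y) by lia] end.

Lemma FIN n a b i k : (i < n)%nat -> (k <= n)%nat ->
  Apol n b (INR i) * dl (S i) k - fq n a b (INR i) * dl i k + Bpol n a (INR i) * dl (i - 1) k
  - (Apol n b (INR k - 1) * (match k with O => 0 | S k' => dl i k' end) - fq n a b (INR k) * dl i k
     + Bpol n a (INR k + 1) * (if Nat.ltb k n then dl i (S k) else 0)) = 0.
Proof.
  intros Hi Hk.
  destruct (Nat.eq_dec k (S i)) as [EA|NA].
  { subst k. cbv beta iota. destruct (Nat.ltb_spec (S i) n); simpl_dl; rewrite ?S_INR; unfold Apol, Bpol, fq; ring. }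
  destruct (Nat.eq_dec k i) as [EB|NB].
  { subst k. destruct (Nat.ltb_spec i n); [|lia]. destruct i as [|i']; cbv beta iota; simpl_dl.
    - rewrite INR_0. unfold Apol, Bpol, fq; ring.
    - unfold Apol, Bpol, fq; ring. }
  destruct (Nat.eq_dec (S k) i) as [EC|NC].
  { subst i. destruct (Nat.ltb_spec k n); [|lia]. destruct k as [|k']; cbv beta iota; simpl_dl;
    rewrite ?S_INR; unfold Apol, Bpol, fq; ring. }
  destruct (Nat.ltb_spec k n); destruct k as [|k']; try (exfalso; lia); cbv beta iota; simpl_dl; ring.
Qed.

Lemma sum_dn n c G i k : (i <= n)%nat -> (k <= n)%nat -> DualH n c G -> SymH G ->
  sum_f_R0 (fun l => c i l * Gdn G k l) n = match k with O => 0 | S k' => dl i k' end.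
Proof.
  intros Hi Hk HD HS. destruct k as [|k']; simpl Gdn.
  - apply sum_zero. intros; ring.
  - rewrite <- (HD i k') by lia. apply sum_eq. intros l Hl. rewrite HS. reflexivity.
Qed.

Lemma sum_up n c G i k : (i <= n)%nat -> (k <= n)%nat -> DualH n c G -> SymH G ->
  sum_f_R0 (fun l => c i l * Gup n G k l) n = if Nat.ltb k n then dl i (S k) else 0.
Proof.
  intros Hi Hk HD HS. unfold Gup. destruct (Nat.ltb_spec k n).
  - rewrite <- (HD i (S k)) by lia. apply sum_eq. intros l Hl. rewrite HS. reflexivity.
  - apply sum_zero. intros; ring.
Qed.

Lemma recur_sum n a b B c i k : a > -1 -> b > -1 -> (i < n)%nat -> (k <= n)%nat -> DualH n c (Gr a b B n) ->
  sum_f_R0 (fun l => Rw n a b c i l * Gr a b B n l k) n = 0.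
Proof.
  intros Ha Hb Hi Hk HD. set (G := Gr a b B n).
  assert (HS : SymH G) by apply Gr_sym.
  rewrite (sum_eq _ (fun l => Apol n b (INR i) * (c (S i) l * G l k) - fq n a b (INR i) * (c i l * G l k)
       + Bpol n a (INR i) * (c (i - 1)%nat l * G l k)
       - (Apol n b (INR l) * c i (S l) * G l k - fq n a b (INR l) * c i l * G l k + Bpol n a (INR l) * c i (l - 1)%nat * G l k))).
  2: { intros l Hl. unfold Rw. ring. }
  rewrite sum6. rewrite !HD by lia.
  set (g := fun l => c i l * (Apol n b (INR l - 1) * Gdn G l k)).
  assert (S4 : sum_f_R0 (fun l => Apol n b (INR l) * c i (S l) * G l k) n = sum_f_R0 g n).
  { assert (Hs := sum_shift g n).
    assert (g 0%nat = 0) by (unfold g, Gdn; ring).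
    assert (g (S n) = 0). { unfold g, Gdn. rewrite S_INR. replace (INR n + 1 - 1) with (INR n) by ring. rewrite Apol_n. ring. }
    rewrite <- (sum_eq (fun l => g (S l))). lra.
    intros l Hl. unfold g, Gdn. rewrite S_INR. replace (INR l + 1 - 1) with (INR l) by ring. ring. }
  set (h := fun l => match l with O => 0 | S l' => Bpol n a (INR l) * c i l' * Gup n G l' k end).
  assert (S6 : sum_f_R0 (fun l => Bpol n a (INR l) * c i (l - 1)%nat * G l k) n
               = sum_f_R0 (fun l => c i l * (Bpol n a (INR l + 1) * Gup n G l k)) n).
  { rewrite (sum_eq _ h).
    - assert (Hs := sum_shift h n).
      assert (h (S n) = 0). { unfold h, Gup. rewrite Nat.ltb_irrefl. ring. }
      assert (h 0%nat = 0) by reflexivity.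
      rewrite <- (sum_eq (fun l => h (S l)) (fun l => c i l * (Bpol n a (INR l + 1) * Gup n G l k))). lra.
      intros l Hl. unfold h. rewrite S_INR. ring.
    - intros l Hl. unfold h. destruct l as [|l'].
      + rewrite INR_0, Bpol_0. ring.
      + unfold Gup. destruct (Nat.ltb_spec l' n); [|lia]. rewrite Nat.sub_succ, Nat.sub_0_r. reflexivity. }
  rewrite S4, S6.
  assert (S5 : sum_f_R0 (fun l => fq n a b (INR l) * c i l * G l k) n = sum_f_R0 (fun l => c i l * (fq n a b (INR l) * G l k)) n).
  { apply sum_eq. intros; ring. }
  rewrite S5, sum3.
  rewrite (sum_eq _ (fun l => Apol n b (INR k - 1) * (c i l * Gdn G k l) - fq n a b (INR k) * (c i l * G k l)
                               + Bpol n a (INR k + 1) * (c i l * Gup n G k l))).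
  2: { intros l Hl. unfold g. unfold G. rewrite <- (Rmult_assoc (c i l)).
       transitivity (c i l * (Apol n b (INR l - 1) * Gdn (Gr a b B n) l k - fq n a b (INR l) * Gr a b B n l k
                            + Bpol n a (INR l + 1) * Gup n (Gr a b B n) l k)). ring.
       rewrite SYM by lia. ring. }
  rewrite (sum_eq _ (fun l => Apol n b (INR k - 1) * (c i l * Gdn G k l) + (- fq n a b (INR k) * (c i l * G k l)
                               + Bpol n a (INR k + 1) * (c i l * Gup n G k l)))) by (intros; ring).
  rewrite !sum_plus2, !sum_scal_l.
  rewrite (sum_dn n c G i k), (sum_up n c G i k) by (auto; lia).
  rewrite (sum_eq (fun l => c i l * G k l) (fun l => c i l * G l k)) by (intros; rewrite HS; reflexivity).
  rewrite HD by lia.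
  pose proof (FIN n a b i k Hi Hk). lra.
Qed.

Lemma cext_in n c i j : (i <= n)%nat -> (j <= n)%nat -> cext n c (Z.of_nat i) (Z.of_nat j) = c i j.
Proof.
  intros Hi Hj. unfold cext.
  replace (Z.leb 0 (Z.of_nat i)) with true by (symmetry; apply Z.leb_le; lia).
  replace (Z.leb (Z.of_nat i) (Z.of_nat n)) with true by (symmetry; apply Z.leb_le; lia).
  replace (Z.leb 0 (Z.of_nat j)) with true by (symmetry; apply Z.leb_le; lia).
  replace (Z.leb (Z.of_nat j) (Z.of_nat n)) with true by (symmetry; apply Z.leb_le; lia).
  simpl. rewrite !Nat2Z.id. reflexivity.
Qed.

Lemma T1 n a c i j : (i <= n)%nat -> (j <= n)%nat ->
  Bpol n a (INR j) * cext n c (Z.of_nat i) (Z.of_nat j - 1) = Bpol n a (INR j) * c i (j - 1)%nat.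
Proof.
  intros Hi Hj. destruct j as [|j'].
  - rewrite INR_0, Bpol_0. ring.
  - replace (Z.of_nat (S j') - 1)%Z with (Z.of_nat j') by lia. rewrite cext_in by lia.
    rewrite Nat.sub_succ, Nat.sub_0_r. reflexivity.
Qed.

Lemma T2 n b c i j : (i <= n)%nat -> (j <= n)%nat ->
  Apol n b (INR j) * cext n c (Z.of_nat i) (Z.of_nat j + 1) = Apol n b (INR j) * c i (S j).
Proof.
  intros Hi Hj. destruct (Nat.eq_dec j n) as [E|E].
  - subst. rewrite Apol_n. ring.
  - replace (Z.of_nat j + 1)%Z with (Z.of_nat (S j)) by lia. rewrite cext_in by lia. reflexivity.
Qed.

Lemma T3 n a c i j : (i <= n)%nat -> (j <= n)%nat ->
  Bpol n a (INR i) * cext n c (Z.of_nat i - 1) (Z.of_nat j) = Bpol n a (INR i) * c (i - 1)%nat j.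
Proof.
  intros Hi Hj. destruct i as [|i'].
  - rewrite INR_0, Bpol_0. ring.
  - replace (Z.of_nat (S i') - 1)%Z with (Z.of_nat i') by lia. rewrite cext_in by lia.
    rewrite Nat.sub_succ, Nat.sub_0_r. reflexivity.
Qed.

Theorem theorem2p2 (n : nat) (alpha beta : R) (c : nat -> nat -> R) (betaAB : R) :
  alpha > -1 -> beta > -1 ->
  is_dual_coeffs n alpha beta c ->
  improper_int01 (fun t => Rpower t alpha * Rpower (1 - t) beta) betaAB ->
  (forall i j : nat, (i < n)%nat -> (j <= n)%nat ->
     c (S i) j =
       / Apol n beta (INR i) *
       ( (INR i - INR j) * (2 * INR i + 2 * INR j - 2 * INR n - alpha + beta) * c i j
         + Bpol n alpha (INR j) * cext n c (Z.of_nat i) (Z.of_nat j - 1)%Z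
         + Apol n beta (INR j) * cext n c (Z.of_nat i) (Z.of_nat j + 1)%Z
         - Bpol n alpha (INR i) * cext n c (Z.of_nat i - 1)%Z (Z.of_nat j) ))
  /\
  (forall j : nat, (j <= n)%nat ->
     c 0%nat j =
       poch (alpha + beta + 1 + 1) n * poch (beta + 2) n / (INR (fact n) * betaAB)
       * ((-1) ^ j / (poch (alpha + 1) (n - j) * poch (beta + 2) j))).
Proof.
  intros Ha Hb Hd Hbeta.
  pose proof (base_imp alpha beta betaAB Hbeta) as H0.
  assert (HD : DualH n c (Gr alpha beta betaAB n)).
  { intros i k Hi Hk. exact (dual_eq n alpha beta c betaAB Ha Hb Hd H0 i k Hi Hk). }
  assert (HB : betaAB <> 0).
  { intros E. specialize (HD 0%nat 0%nat ltac:(lia) ltac:(lia)).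
    rewrite sum_zero in HD. unfold dl in HD. simpl in HD. lra.
    intros l Hl. unfold Gr. rewrite E. unfold Rdiv. ring. }
  split.
  - intros i j Hi Hj.
    assert (HR : Rw n alpha beta c i j = 0).
    { rewrite (row_solve n c (Gr alpha beta betaAB n) HD (Gr_sym _ _ _ _) (Rw n alpha beta c i) (fun _ => 0)).
      - apply sum_zero. intros; ring.
      - intros k Hk. apply recur_sum; auto.
      - exact Hj. }
    rewrite T1, T2, T3 by lia.
    assert (HA : Apol n beta (INR i) <> 0).
    { unfold Apol. assert (INR i < INR n) by (apply lt_INR; exact Hi). pose proof (pos_INR i).
      apply Rmult_integral_contrapositive_currified; lra. }
    replace ((INR i - INR j) * (2 * INR i + 2 * INR j - 2 * INR n - alpha + beta) * c i j
       + Bpol n alpha (INR j) * c i (j - 1)%nat + Apol n beta (INR j) * c i (S j)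
       - Bpol n alpha (INR i) * c (i - 1)%nat j)
      with (Apol n beta (INR i) * c (S i) j - Rw n alpha beta c i j) by (unfold Rw, fq; ring).
    rewrite HR. field. exact HA.
  - intros j Hj. rewrite (first_row n alpha beta c betaAB Ha Hb HB HD j Hj). reflexivity.
Qed.
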